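(* Let $G$ be a graph on $\{x_1,\dots,x_n\}$ such that the edge ideal $I=I(G)\subset S$ has linear quotients, and let $P\subset S$ be a monomial prime ideal (an ideal generated by a subset of the variables). Then $PI$ has linear quotients.
   Context: $S=K[x_1,\dots,x_n]$, $I(G)=(x_ix_j:\{x_i,x_j\}\in E(G))$. A monomial ideal $J$ has linear quotients if its minimal monomial generators can be ordered $u_1,\dots,u_s$ such that for each $i=2,\dots,s$ the colon ideal $(u_1,\dots,u_{i-1}):(u_i)$ is generated by variables. *)

(* Defs.v *)
From mathcomp Require Import all_boot.
Set Implicit Arguments. Unset Strict Implicit. Unset Printing Implicit Defensive.

(* Monomials of S = K[x_0,...,x_{n-1}] are represented by exponent vectors. *)
Definition monom (n : nat) := {ffun 'I_n -> nat}.

Definition mmul n (a b : monom n) : monom n := [ffun k => a k + b k].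

Definition mvar n (k : 'I_n) : monom n := [ffun j => nat_of_bool (j == k)].

Definition mdvd n (a b : monom n) : bool := [forall k, a k <= b k].

Definition in_mideal n (U : seq (monom n)) (m : monom n) : bool :=
  has (fun u => mdvd u m) U.

Definition mingens n (U : seq (monom n)) : seq (monom n) :=
  undup [seq u <- U | all (fun v => mdvd v u ==> (v == u)) U].

(* The colon ideal (u_1,...,u_{i-1}) : (u_i) (0-indexed: generators before
   position i, colon by the i-th one) is generated by a set of variables V.
   Colon ideals of monomial ideals are monomial ideals, and a monomial ideal
   is determined by the monomials it contains, so this compares monomials. *)
Definition colon_gen_by_vars n (ord : seq (monom n)) (i : nat) : Prop :=
  exists V : {set 'I_n}, forall m : monom n,
    in_mideal (take i ord) (mmul m (nth m ord i)) =
    [exists k in V, mdvd (mvar k) m].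

Definition linear_quotients n (U : seq (monom n)) : Prop :=
  exists ord : seq (monom n),
    perm_eq ord (mingens U) /\
    forall i, 0 < i < size ord -> colon_gen_by_vars ord i.

Definition simple_graph n (e : rel 'I_n) : Prop :=
  symmetric e /\ irreflexive e.

Definition edge_gens n (e : rel 'I_n) : seq (monom n) :=
  [seq mmul (mvar p.1) (mvar p.2) | p <- enum [pred p : 'I_n * 'I_n | e p.1 p.2]].

Definition prime_gens n (A : {set 'I_n}) : seq (monom n) :=
  [seq mvar k | k <- enum A].

Definition prod_gens n (U W : seq (monom n)) : seq (monom n) :=
  [seq mmul u w | u <- U, w <- W].

(* Main.v *)
Require Import Defs.
From mathcomp Require Import all_boot zify.
Set Implicit Arguments. Unset Strict Implicit. Unset Printing Implicit Defensive.


Section H.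
Variable n : nat.
Implicit Types (a b w : monom n).

Definition dvdt a w (t : 'I_n) := forall c, a c <= w c + (c == t).

Definition deg a := \sum_(c : 'I_n) a c.

Lemma deg_mmul a b : deg (mmul a b) = deg a + deg b.
Proof. by rewrite /deg -big_split; apply: eq_bigr => c _; rewrite ffunE. Qed.

Lemma deg_mvar k : deg (mvar k) = 1.
Proof.
rewrite /deg (bigD1 k) //= ffunE eqxx big1 // => c /negbTE H.
by rewrite ffunE H.
Qed.

Lemma mdvd_deg a b : mdvd a b -> deg a = deg b -> a = b.
Proof.
move=> /forallP H E; apply/ffunP => c.
have Hc := H c.
move: E; rewrite /deg (bigD1 c) //= [in RHS](bigD1 c) //=.
set S1 := (X in a c + X = _). set S2 := (X in _ = b c + X).
have : S1 <= S2 by apply: leq_sum => i _; exact: H.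
lia.
Qed.

Lemma index_le (x0 : monom n) s i x : i < size s -> nth x0 s i = x -> index x s <= i.
Proof.
move=> Hi Hx; rewrite leqNgt; apply/negP => H.
have := before_find x0 H; by rewrite Hx /= eqxx.
Qed.

End H.

Lemma nth_allpairs_pos (T1 T2 R : Type) (f : T1 -> T2 -> R) (s : seq T1) (t : seq T2)
  x0 y0 z0 j k : j < size s -> k < size t ->
  nth z0 [seq f x y | x <- s, y <- t] (j * size t + k) = f (nth x0 s j) (nth y0 t k).
Proof.
elim: s j => [|x s IH] [|j] //= Hj Hk.
  by rewrite nth_cat size_map Hk (nth_map y0).
rewrite nth_cat size_map mulSn -addnA ltnNge leq_addr /= addKn IH //.
Qed.


Section C.
Variable n : nat.
Definition m0 : monom n := [ffun _ => 0].

Definition cond (L : seq (monom n)) i := forall j, j < i ->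
  exists j'' t, j'' < i /\ dvdt (nth m0 L j'') (nth m0 L i) t /\
                nth m0 L i t < nth m0 L j t.

Lemma colon_suff L i : i < size L -> cond L i -> colon_gen_by_vars L i.
Proof.
move=> Hi Hc.
exists [set t | [exists j : 'I_i, [forall c, nth m0 L j c <= nth m0 L i c + (c == t)]]].
move=> m; rewrite (set_nth_default m0) //.
apply/idP/idP.
- case/hasP => u Hu /forallP Hd.
  have Hj : index u (take i L) < i.
    by rewrite -{2}(size_takel (ltnW Hi)) index_mem.
  have Hu' : nth m0 L (index u (take i L)) = u.
    by rewrite -(nth_take m0 Hj) nth_index.
  have [j'' [t [Hj'' [Hdv Hlt]]]] := Hc _ Hj.
  apply/existsP; exists t; apply/andP; split.
    by rewrite inE; apply/existsP; exists (Ordinal Hj''); apply/forallP => c; exact: Hdv.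
  apply/forallP => c; rewrite ffunE; case: eqP => //= ->.
  move: (Hd t) Hlt; rewrite Hu' ffunE; lia.
- case/existsP => t /andP [].
  rewrite inE => /existsP [j /forallP Hj] /forallP Ht.
  apply/hasP; exists (nth m0 L j).
    by rewrite -(nth_take m0 (ltn_ord j)) mem_nth // size_takel // ltnW.
  apply/forallP => c; rewrite ffunE.
  move: (Hj c) (Ht c); rewrite ffunE; lia.
Qed.

Lemma colon_nec L i : i < size L -> colon_gen_by_vars L i -> cond L i.
Proof.
move=> Hi [V HV] j Hj.
have Hji : j < size L by apply: ltn_trans Hi.
pose u := nth m0 L j; pose w := nth m0 L i.
have Hut : u \in take i L by rewrite /u -(nth_take m0 Hj) mem_nth // size_takel // ltnW.
have := HV [ffun c => u c - w c]; rewrite (set_nth_default m0) // -/w.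
have -> : in_mideal (take i L) (mmul [ffun c => u c - w c] w).
  apply/hasP; exists u => //; apply/forallP => c; rewrite !ffunE; lia.
move/esym/existsP => [t /andP [tV /forallP Ht]].
have Hlt : w t < u t by move: (Ht t); rewrite !ffunE eqxx; lia.
have := HV (mvar t); rewrite (set_nth_default m0) // -/w.
have -> : [exists k in V, mdvd (mvar k) (mvar t)].
  by apply/existsP; exists t; rewrite tV /=; apply/forallP => c.
case/hasP => v Hv /forallP Hd.
have Hj'' : index v (take i L) < i.
  by rewrite -{2}(size_takel (ltnW Hi)) index_mem.
exists (index v (take i L)), t; split => //; split => //.
have -> : nth m0 L (index v (take i L)) = v by rewrite -(nth_take m0 Hj'') nth_index.
move=> c; move: (Hd c); rewrite !ffunE; lia.
Qed.
End C.


Section K.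
Variable n : nat.

Lemma concrete_sym (K K' a b p q : 'I_n) :
  K = p -> (K' = a) -> 
  mmul (mvar K') (mmul (mvar p) (mvar q)) != mmul (mvar K) (mmul (mvar a) (mvar b)) ->
  exists d, dvdt (mmul (mvar K') (mmul (mvar p) (mvar q)))
                 (mmul (mvar K) (mmul (mvar a) (mvar b))) d /\
    mmul (mvar K) (mmul (mvar a) (mvar b)) d < mmul (mvar K') (mmul (mvar p) (mvar q)) d.
Proof.
move=> Ep Ea Hne; subst p K'.
have Hqb : q != b.
  apply/eqP => Eq; subst q; move/negP: Hne; apply; apply/eqP/ffunP => c.
  rewrite !ffunE; lia.
exists q; split.
  move=> c; rewrite !ffunE; lia.
rewrite !ffunE eqxx (negbTE Hqb); lia.
Qed.

Lemma mmulC (x y : monom n) : mmul x y = mmul y x.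
Proof. by apply/ffunP => c; rewrite !ffunE addnC. Qed.

Lemma concrete (K K' a b p q : 'I_n) :
  K != K' ->
  mmul (mvar a) (mvar b) K < mmul (mvar p) (mvar q) K ->
  mmul (mvar K') (mmul (mvar p) (mvar q)) K' <= mmul (mvar K) (mmul (mvar a) (mvar b)) K' ->
  mmul (mvar K') (mmul (mvar p) (mvar q)) != mmul (mvar K) (mmul (mvar a) (mvar b)) ->
  exists d, dvdt (mmul (mvar K') (mmul (mvar p) (mvar q)))
                 (mmul (mvar K) (mmul (mvar a) (mvar b))) d /\
    mmul (mvar K) (mmul (mvar a) (mvar b)) d < mmul (mvar K') (mmul (mvar p) (mvar q)) d.
Proof.
move=> HKK' H1 H2 Hne.
have HKpq : (K == p) || (K == q).
  move: H1; rewrite !ffunE; case: (K == p); case: (K == q) => //=; lia.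
have HK'ab : (K' == a) || (K' == b).
  have HK'K : K' != K by rewrite eq_sym.
  move: H2; rewrite !ffunE eqxx (negbTE HK'K); case: (K' == a); case: (K' == b) => //=; lia.
case/orP: HKpq => /eqP Ep; case/orP: HK'ab => /eqP Ea.
- exact: concrete_sym.
- rewrite [mmul (mvar a) _]mmulC in Hne *; exact: concrete_sym.
- rewrite [mmul (mvar p) _]mmulC in Hne *; exact: concrete_sym.
- rewrite [mmul (mvar a) _]mmulC [mmul (mvar p) _]mmulC in Hne *; exact: concrete_sym.
Qed.
End K.


Arguments m0 {n}.
Section M.
Variable n : nat.
Variable e : rel 'I_n.
Variable A : {set 'I_n}.
Variable ord : seq (monom n).
Hypothesis He : simple_graph e.
Hypothesis Hperm : perm_eq ord (mingens (edge_gens e)).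
Hypothesis Hlq : forall i, 0 < i < size ord -> colon_gen_by_vars ord i.

Lemma mem_mingens (U : seq (monom n)) x :
  (x \in mingens U) = (x \in U) && all (fun v => mdvd v x ==> (v == x)) U.
Proof. by rewrite mem_undup mem_filter andbC. Qed.

Lemma edge_form u : u \in edge_gens e ->
  exists p q, p != q /\ u = mmul (mvar p) (mvar q).
Proof.
case/mapP => [[p q]]; rewrite mem_enum /= => Hpq ->.
exists p, q; split => //; apply/eqP => E; subst q.
by case: He => _ Hirr; move: Hpq; rewrite inE /= Hirr.
Qed.

Lemma O1 : uniq ord.
Proof. by rewrite (perm_uniq Hperm) undup_uniq. Qed.

Lemma O2 u : u \in ord -> exists p q, p != q /\ u = mmul (mvar p) (mvar q).
Proof.
by rewrite (perm_mem Hperm) mem_mingens => /andP [H _]; apply: edge_form.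
Qed.

Lemma deg_edge u : u \in edge_gens e -> deg u = 2.
Proof. by case/edge_form => p [q [_ ->]]; rewrite deg_mmul !deg_mvar. Qed.

Lemma O3 u : u \in edge_gens e -> u \in ord.
Proof.
move=> Hu; rewrite (perm_mem Hperm) mem_mingens Hu /=.
apply/allP => v Hv; apply/implyP => Hd; apply/eqP.
by apply: mdvd_deg => //; rewrite !deg_edge.
Qed.

Lemma O4 j : 0 < j < size ord -> cond ord j.
Proof. move=> Hj; apply: colon_nec; [by case/andP: Hj | exact: Hlq]. Qed.

Definition As := enum A.
Definition r := size As.
Definition L := [seq mmul (mvar a) u | u <- ord, a <- As].
Definition rk w := index w L.

Lemma size_L : size L = size ord * r.
Proof. by rewrite size_allpairs. Qed.

Lemma L_nth a0 j k : j < size ord -> k < r ->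
  nth m0 L (j * r + k) = mmul (mvar (nth a0 As k)) (nth m0 ord j).
Proof. by move=> Hj Hk; rewrite /L /r (nth_allpairs_pos _ m0 a0). Qed.

Lemma L_pos a0 w : w \in L -> exists j k, [/\ j < size ord, k < r,
  rk w = j * r + k & w = mmul (mvar (nth a0 As k)) (nth m0 ord j)].
Proof.
move=> Hw.
have Hi : rk w < size ord * r by rewrite -size_L index_mem.
have Hr : 0 < r by move: Hi; case: (r) => //; rewrite muln0.
exists (rk w %/ r), (rk w %% r); split.
- by rewrite ltn_divLR.
- by rewrite ltn_pmod.
- by rewrite -divn_eq.
- by rewrite -L_nth ?ltn_divLR ?ltn_pmod // -divn_eq nth_index.
Qed.

Lemma L_le a0 j k : j < size ord -> k < r ->
  rk (mmul (mvar (nth a0 As k)) (nth m0 ord j)) <= j * r + k.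
Proof.
move=> Hj Hk; apply: (@index_le n m0 L (j * r + k)); last exact: L_nth.
rewrite size_L; nia.
Qed.

Lemma core w w' : w \in L -> w' \in L -> rk w' < rk w ->
  exists w'' t, [/\ w'' \in L, rk w'' < rk w, dvdt w'' w t & w t < w' t].
Proof.
move=> Hw Hw' Hlt.
have [a0 _] : exists a0 : 'I_n, True.
  by case/allpairsP: Hw => [[u a]] [_ Ha _]; exists a.
have HwL : rk w < size L by rewrite index_mem.
have inL : forall x, rk x < rk w -> x \in L.
  by move=> x Hx; rewrite -index_mem; apply: ltn_trans HwL.
have [j [k [Hj Hk Erw Ew]]] := L_pos a0 Hw.
have [j' [k' [Hj' Hk' Erw' Ew']]] := L_pos a0 Hw'.
set K := nth a0 As k in Ew; set K' := nth a0 As k' in Ew'.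
set u := nth m0 ord j in Ew; set u' := nth m0 ord j' in Ew'.
case: (eqVneq j' j) => [Ejj|Njj].
  subst j'.
  have Nkk : k' != k by apply/eqP => E; subst k'; move: Hlt; rewrite Erw Erw'; lia.
  have NK : K' != K by rewrite /K /K' nth_uniq // enum_uniq.
  exists w', K'; split => //.
    by move=> c; rewrite Ew Ew' /u /u' !ffunE; lia.
  by rewrite Ew Ew' /u /u' !ffunE eqxx (negbTE NK); lia.
have Hjj : j' < j by move/eqP: Njj => Njj; move: Hlt; rewrite Erw Erw'; nia.
have Hj0 : 0 < j < size ord by apply/andP; split; [lia | exact: Hj].
have [j'' [t [Hj'' [Hdv Hut]]]] := O4 Hj0 Hjj.
have Hj''s : j'' < size ord by lia.
case Hwt: (w t < w' t).
  exists (mmul (mvar K) (nth m0 ord j'')), t.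
  have Hr : rk (mmul (mvar K) (nth m0 ord j'')) < rk w.
    by apply: leq_ltn_trans (L_le a0 Hj''s Hk) _; rewrite Erw; nia.
  split => //; first exact: inL.
  by move=> c; rewrite Ew !ffunE; move: (Hdv c); rewrite -/u; lia.
have EtK : t = K.
  apply/eqP; move/negbT: Hwt; rewrite -leqNgt Ew Ew' !ffunE.
  move: Hut; rewrite -/u -/u'; case: (t == K); case: (t == K') => //=; lia.
subst t.
have NK : K != K'.
  apply/negP => /eqP E; move/negbT: Hwt; rewrite -leqNgt Ew Ew' !ffunE -E eqxx.
  move: Hut; rewrite -/u -/u'; lia.
case Hw2: (w K' < w' K').
  exists (mmul (mvar K') (nth m0 ord j'')), K'.
  have Hr : rk (mmul (mvar K') (nth m0 ord j'')) < rk w.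
    by apply: leq_ltn_trans (L_le a0 Hj''s Hk') _; rewrite Erw; nia.
  split => //; first exact: inL.
  by move=> c; rewrite Ew !ffunE; move: (Hdv c); rewrite -/u; lia.
have [a [b [_ Eu]]] := O2 (mem_nth m0 Hj).
have [p [q [_ Eu']]] := O2 (mem_nth m0 Hj').
have Hne : w' != w by apply/eqP => E; move: Hlt; rewrite E ltnn.
have [d [Hd1 Hd2]] : exists d, dvdt w' w d /\ w d < w' d.
  rewrite Ew Ew' /u /u' Eu Eu'; apply: concrete => //.
  - by move: Hut; rewrite /u /u' Eu Eu'.
  - by move/negbT: Hw2; rewrite -leqNgt Ew Ew' /u /u' Eu Eu'.
  - by move: Hne; rewrite Ew Ew' /u /u' Eu Eu'.
by exists w', d.
Qed.

Definition leT (x y : monom n) := rk x <= rk y.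
Definition W := sort leT (undup L).

Lemma deg3 x : x \in prod_gens (prime_gens A) (edge_gens e) -> deg x = 3.
Proof.
case/allpairsP => [[v u]] [/mapP [k _ ->] Hu ->] /=.
by rewrite deg_mmul deg_mvar deg_edge.
Qed.

Lemma memL x : (x \in L) = (x \in prod_gens (prime_gens A) (edge_gens e)).
Proof.
apply/idP/idP.
- case/allpairsP => [[u a]] [Hu Ha ->] /=.
  apply/allpairsP; exists (mvar a, u); split => //.
    by apply/mapP; exists a.
  by rewrite (perm_mem Hperm) mem_mingens in Hu; case/andP: Hu.
- case/allpairsP => [[v u]] [/mapP [k Hk ->] Hu ->] /=.
  by apply/allpairsP; exists (u, k); split => //; apply: O3.
Qed.

Lemma W_perm : perm_eq W (mingens (prod_gens (prime_gens A) (edge_gens e))).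
Proof.
rewrite /W perm_sort; apply: uniq_perm; rewrite ?undup_uniq // => x.
rewrite mem_undup mem_mingens memL.
case Hx: (x \in prod_gens _ _) => //=; apply/esym/allP => v Hv; apply/implyP => Hd; apply/eqP.
by apply: mdvd_deg => //; rewrite !deg3.
Qed.

Lemma W_cond i : 0 < i < size W -> colon_gen_by_vars W i.
Proof.
case/andP => Hi0 Hi; apply: colon_suff => // j Hj.
have Hs : sorted leT W by apply: sort_sorted => x y; exact: leq_total.
have Hmono := @sorted_leq_nth _ leT (fun y x z => @leq_trans (rk y) (rk x) (rk z)) (fun x => leqnn (rk x)) m0 W Hs.
have HuW : uniq W by rewrite sort_uniq undup_uniq.
have HWL : forall x, x \in W -> x \in L by move=> x; rewrite mem_sort mem_undup.
have Hjs : j < size W by apply: ltn_trans Hi.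
have Hwi : nth m0 W i \in L by apply/HWL/mem_nth.
have Hwj : nth m0 W j \in L by apply/HWL/mem_nth.
have Hlt : rk (nth m0 W j) < rk (nth m0 W i).
  have Hle : leT (nth m0 W j) (nth m0 W i) by apply: Hmono; rewrite ?inE // ltnW.
  rewrite ltn_neqAle (Hle : rk _ <= rk _) andbT.
  apply/negP => /eqP E.
  have : nth m0 W j = nth m0 W i by rewrite -(nth_index m0 Hwj) -(nth_index m0 Hwi); congr nth.
  move/eqP; rewrite nth_uniq //.
  by move/eqP => Eji; move: Hj; rewrite Eji ltnn.
have [w'' [t [H1 H2 H3 H4]]] := core Hwi Hwj Hlt.
have Hw''W : w'' \in W by rewrite mem_sort mem_undup.
exists (index w'' W), t; rewrite nth_index //; split => //.
rewrite ltnNge; apply/negP => Hle.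
have := Hmono i (index w'' W); rewrite !inE index_mem Hw''W Hi nth_index // => /(_ isT isT Hle).
by rewrite /leT leqNgt H2.
Qed.

End M.


Theorem lemma3p3 (n : nat) (e : rel 'I_n) (A : {set 'I_n}) :
  simple_graph e ->
  linear_quotients (edge_gens e) ->
  linear_quotients (prod_gens (prime_gens A) (edge_gens e)).
Proof.
move=> He [ord [Hperm Hlq]].
exists (W A ord); split.
  exact: (W_perm A He Hperm).
move=> i Hi; exact: (W_cond He Hperm Hlq Hi).
Qed.
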